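(* Let $X$ be a real Banach space, $x \in S(X)$, $\gamma > 0$ and $k \in \mathbb{N}$ be such that $1 - 2k(1-\gamma) > 0$. Then \[ \operatorname{diam}\big(S(B(X^* ), x, 1 - 2k(1-\gamma))\big) \leq 2k \, \operatorname{diam}\big(S(B(X^* ), x, \gamma)\big). \]
   Context: $B(\cdot)$, $S(\cdot)$ denote closed unit ball and unit sphere. For $x \in S(X)$ and real $\alpha$, the w*-slice is $S(B(X^* ), x, \alpha) := \{g \in B(X^* ) : g(x) > \alpha\}$ (the diameter of the empty set is taken as $0$). *)

(* Defs.v *)
From HB Require Import structures.
From mathcomp Require Import all_boot all_order all_algebra.
From mathcomp Require Import all_classical all_reals all_analysis.
Set Implicit Arguments. Unset Strict Implicit. Unset Printing Implicit Defensive.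
Import Order.TTheory GRing.Theory Num.Theory.
Import numFieldNormedType.Exports.
Local Open Scope classical_set_scope.
Local Open Scope ring_scope.

Definition is_lin_functional (R : realType) (X : normedModType R) (f : X -> R) :=
  forall (a : R) (y z : X), f (a *: y + z) = a * f y + f z.

Definition dual_norm (R : realType) (X : normedModType R) (f : X -> R) : \bar R :=
  ereal_sup [set (`|f y|)%:E | y in [set y : X | `|y| <= 1]].

(* Closed unit ball B(X^* ) of the dual: linear functionals of dual norm <= 1
   (these are automatically continuous). *)
Definition dual_ball (R : realType) (X : normedModType R) : set (X -> R) :=
  [set f | is_lin_functional f /\ (dual_norm f <= 1%:E)%E].

Definition wslice (R : realType) (X : normedModType R) (x : X) (alpha : R)
  : set (X -> R) :=
  [set g : X -> R | dual_ball g /\ alpha < g x].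

(* Diameter w.r.t. the dual norm; the diameter of the empty set is 0. *)
Definition dual_diam (R : realType) (X : normedModType R) (A : set (X -> R))
  : \bar R :=
  Order.max 0%E (ereal_sup [set dual_norm (f \- g) | f in A & g in A]).

(* Main.v *)
Require Import Defs.
From HB Require Import structures.
From mathcomp Require Import all_boot all_order all_algebra.
From mathcomp Require Import all_classical all_reals all_analysis.
From mathcomp Require Import ring lra.
Import Order.TTheory GRing.Theory Num.Theory.
Import numFieldNormedType.Exports.
Local Open Scope classical_set_scope.
Local Open Scope ring_scope.
Set Implicit Arguments. Unset Strict Implicit.

Section HBS.
Variables (R : realType) (X : normedModType R) (x : X).

Definition goodG (G : set (X * R)) :=
  [/\ (forall a p q, G p -> G q -> G (a *: p.1 + q.1, a * p.2 + q.2)),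
      (forall p, G p -> p.2 <= `|p.1|) &
      (forall p, G p -> G (x, 1))].

Lemma goodG0 G p : goodG G -> G p -> G (0, 0).
Proof.
case=> Hc _ _ Gp; have := Hc (-1) p p Gp Gp.
by rewrite scaleN1r addNr mulN1r addNr.
Qed.

Lemma goodG_fun G y r s : goodG G -> G (y, r) -> G (y, s) -> r = s.
Proof.
move=> gG Gr Gs; case: (gG) => Hc Hd _.
have h1 := Hd _ (Hc (-1) _ _ Gr Gs); have h2 := Hd _ (Hc (-1) _ _ Gs Gr).
move: h1 h2; rewrite /= scaleN1r addNr normr0 !mulN1r => h1 h2.
by apply/eqP; rewrite eq_le; apply/andP; split; lra.
Qed.

Lemma goodG_scale G a p : goodG G -> G p -> G (a *: p.1, a * p.2).
Proof.
move=> gG Gp; have G0 := goodG0 gG Gp; case: (gG) => Hc _ _.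
by have := Hc a p _ Gp G0; rewrite /= !addr0.
Qed.

Lemma goodG_ext A z : goodG A -> A (x, 1) -> ~ (exists r, A (z, r)) ->
  exists B, goodG B /\ A `<` B.
Proof.
move=> gA Ax nz.
have A0 := goodG0 gA Ax.
case: (gA) => Hc Hd Hx.
pose E := [set p.2 - `|p.1 - z| | p in A].
have Ene : E !=set0 by exists (0 - `|0 - z|); exists (0, 0).
have Eub : forall q, A q -> ubound E (`|q.1 + z| - q.2).
  move=> q Aq _ [p Ap <-].
  have h := Hd _ (Hc 1 p q Ap Aq); rewrite /= scale1r mul1r in h.
  have tri : `|p.1 + q.1| <= `|p.1 - z| + `|q.1 + z|.
    have -> : p.1 + q.1 = (p.1 - z) + (q.1 + z) by rewrite addrACA addNr addr0.
    exact: ler_normD.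
  lra.
have Esup : has_sup E.
  split => //; move: (Eub _ A0) => h; eexists; exact: h.
pose c := sup E.
have cle : forall q, A q -> c <= `|q.1 + z| - q.2.
  by move=> q Aq; apply: ge_sup => //; move: (Eub _ Aq) => h; exact: h.
have cge : forall p, A p -> p.2 - `|p.1 - z| <= c.
  by move=> p Ap; apply: sup_upper_bound => //; exists p.
pose B := [set q : X * R | exists p t, A p /\ q = (p.1 + t *: z, p.2 + t * c)].
have AB : A `<=` B.
  by move=> [y r] Ap; exists (y, r), 0; rewrite scale0r mul0r !addr0.
exists B; split; last first.
  split => // BA; apply: nz; exists c; apply: BA.
  by exists (0, 0), 1; rewrite scale1r mul1r !add0r.
split.
- move=> a _ _ [p1 [t1 [A1 ->]]] [p2 [t2 [A2 ->]]].
  exists (a *: p1.1 + p2.1, a * p1.2 + p2.2), (a * t1 + t2); split.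
    exact: Hc.
  congr pair => /=; last by ring.
  rewrite scalerDr scalerA addrACA scalerDl.
  by [].
- move=> _ [[y r] [t [Ap ->]]] /=.
  have Hy := Hd _ Ap; rewrite /= in Hy.
  have [t0|tn0] := eqVneq t 0.
    by rewrite t0 scale0r mul0r !addr0.
  have key : forall u : R, u != 0 ->
      `|y + t *: z| = `|u| * `|u^-1 *: y + (u^-1 * t) *: z|.
    move=> u u0; rewrite -normrZ scalerDr !scalerA mulrA mulfV // !mul1r.
    by rewrite !scale1r.
  have [tp|tn] := ltP 0 t.
    have := cle _ (goodG_scale t^-1 gA Ap); rewrite /= => h.
    rewrite (key t tn0) mulVf // scale1r gtr0_norm //.
    have := ler_wpM2l (ltW tp) h; rewrite mulrBr mulrA mulfV // mul1r.
    lra.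
  have tneg : t < 0 by rewrite lt_neqAle tn0 tn.
  have := cge _ (goodG_scale (- t^-1) gA Ap); rewrite /= => h.
  have sp : 0 < - t by rewrite oppr_gt0.
  have e1 : `|y + t *: z| = (- t) * `|- t^-1 *: y - z|.
    rewrite -{1}(gtr0_norm sp) -normrZ scalerBr scalerA mulrNN mulfV //.
    by rewrite scale1r scaleNr opprK.
  have := ler_wpM2l (ltW sp) h.
  rewrite mulrBr mulrA mulrNN mulfV // mul1r -e1.
  lra.
- move=> q [p [t [Ap _]]]; apply: AB; exact: Hx Ap.
Qed.

Lemma hahn_banach_x : `|x| = 1 ->
  exists phi : X -> R, [/\ is_lin_functional phi,
     (forall y, `|phi y| <= `|y|) & phi x = 1].
Proof.
move=> nx.
have [A [gA Amax]] : exists A, goodG A /\ forall B, A `<` B -> ~ goodG B.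
  apply: Zorn_bigcup => F FP Ftot; split.
  - move=> a p q [G1 FG1 p1] [G2 FG2 p2].
    have [s12|s21] := Ftot _ _ FG1 FG2.
      exists G2 => //; case: (FP _ FG2) => Hc _ _; apply: Hc => //; exact: s12.
    exists G1 => //; case: (FP _ FG1) => Hc _ _; apply: Hc => //; exact: s21.
  - by move=> p [G FG Gp]; case: (FP _ FG) => _ Hd _; exact: Hd.
  - by move=> p [G FG Gp]; exists G => //; case: (FP _ FG) => _ _ Hx; exact: Hx Gp.
have Ax : A (x, 1).
  apply: contrapT => nAx.
  pose L := [set q : X * R | exists t : R, q = (t *: x, t)].
  have A0 : A = set0.
    apply/seteqP; split => // p Ap; apply: nAx; by case: gA => _ _ Hx; exact: Hx Ap.
  apply: (Amax L).
    rewrite A0; split; first by [].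
    move=> /(_ (x, 1)) h; apply: (h _); by exists 1; rewrite scale1r.
  split.
  - move=> a _ _ [t1 ->] [t2 ->]; exists (a * t1 + t2) => /=.
    by rewrite scalerDl scalerA.
  - move=> _ [t ->] /=; rewrite normrZ nx mulr1; exact: ler_norm.
  - by move=> _ _; exists 1; rewrite scale1r.
have tot : forall z, exists r, A (z, r).
  move=> z; apply: contrapT => nz.
  have [B [gB AB]] := goodG_ext gA Ax nz.
  exact: (Amax B AB gB).
have [phi Hphi] := choice tot.
have [Hc Hd _] := gA.
have A0 := goodG0 gA Ax.
exists phi; split.
- move=> a y z.
  apply: (goodG_fun gA (Hphi _)) => /=.
  exact: (Hc a (y, phi y) (z, phi z) (Hphi y) (Hphi z)).
- move=> y; rewrite ler_norml; apply/andP; split.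
    have h := goodG_scale (-1) gA (Hphi y); rewrite /= scaleN1r mulN1r in h.
    have := Hd _ (Hphi (- y)); rewrite /= normrN.
    rewrite -(goodG_fun gA h (Hphi (-y))).
    lra.
  exact: (Hd _ (Hphi y)).
- exact: (goodG_fun gA (Hphi x) Ax).
Qed.
End HBS.


Lemma dual_le1 (R : realType) (X : normedModType R) (f : X -> R) (y : X) :
  dual_ball f -> (`|y| <= 1)%R -> (`|f y| <= 1)%R.
Proof.
move=> [_ hf] hy; rewrite -lee_fin; apply: le_trans hf.
by apply: ereal_sup_ubound; exists y.
Qed.

Theorem mainTheorem5 (R : realType) (X : completeNormedModType R) (x : X)
  (gamma : R) (k : nat) :
  `|x| = 1 -> 0 < gamma -> 0 < 1 - 2 * k%:R * (1 - gamma) ->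
  (dual_diam (wslice x (1 - 2 * k%:R * (1 - gamma)))
     <= (2 * k%:R)%:E * dual_diam (wslice x gamma))%E.
Proof.
move=> nx g0 a0.
have [phi [lphi nphi phix]] := hahn_banach_x nx.
have k0 : (0 <= 2 * k%:R :> R)%R by rewrite mulr_ge0.
have D0 : (0 <= dual_diam (wslice x gamma))%E by rewrite /dual_diam le_max lexx.
rewrite {1}/dual_diam ge_max; apply/andP; split.
  by apply: mule_ge0; rewrite ?lee_fin.
apply: ge_ereal_sup => _ [f [[lf nf] fx] [g [[lg ng] gx] <-]].
have fx1 : f x <= 1.
  apply: le_trans (ler_norm _) _; apply: (dual_le1 (conj lf nf)); by rewrite nx.
have [kz|kp] := eqVneq k 0%N.
  by move: fx; rewrite kz mulr0 mul0r subr0 => fx; move: (lt_le_trans fx fx1); rewrite ltxx.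
have k1 : (1 <= k%:R :> R) by rewrite ler1n lt0n.
pose t : R := (2 * k%:R)^-1.
have t0 : 0 < t by rewrite invr_gt0; lra.
have t1 : t <= 1 by rewrite invf_le1; lra.
have tk : t * (2 * k%:R) = 1 by rewrite mulVf //; lra.
pose ft := fun y => (1 - t) * phi y + t * f y.
pose gt := fun y => (1 - t) * phi y + t * g y.
have inS : forall h, is_lin_functional h -> (dual_norm h <= 1)%E ->
    1 - 2 * k%:R * (1 - gamma) < h x ->
    wslice x gamma (fun y => (1 - t) * phi y + t * h y).
  move=> h lh nh hx; split; first split.
  - by move=> a y z /=; rewrite lphi lh; ring.
  - apply: ge_ereal_sup => _ [y hy <-]; rewrite lee_fin.
    have hy1 : `|y| <= 1 := hy.
    have := nphi y; have := dual_le1 (conj lh nh) hy1 => e1 e2.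
    apply: le_trans (ler_normD _ _) _.
    have t1p : 0 <= 1 - t by lra.
    rewrite !normrM (ger0_norm t1p) (gtr0_norm t0).
    nra.
  - rewrite /= phix mulr1.
    have : t * (1 - h x) < t * (2 * k%:R * (1 - gamma)).
      by rewrite ltr_pM2l //; lra.
    rewrite mulrA tk mul1r; lra.
have Sf := inS f lf nf fx.
have Sg := inS g lg ng gx.
apply: (@le_trans _ _ ((2 * k%:R)%:E * dual_norm (ft \- gt)%R)%E).
  apply: ge_ereal_sup => _ [y hy <-].
  have -> : `|(f \- g) y| = (2 * k%:R * `|(ft \- gt) y|)%R.
    rewrite -[X in (X * _)%R](@ger0_norm _ (2 * k%:R)) // -normrM; congr `|_|.
    rewrite /ft /gt /=.
    have -> : (1 - t) * phi y + t * f y - ((1 - t) * phi y + t * g y) = t * (f y - g y) by ring.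
    by rewrite mulrA (mulrC _ t) tk mul1r.
  rewrite [X in (X <= _)%E]EFinM; apply: lee_wpmul2l; first by rewrite lee_fin.
  by apply: ereal_sup_ubound; exists y.
apply: lee_wpmul2l; first by rewrite lee_fin.
rewrite /dual_diam le_max; apply/orP; right.
by apply: ereal_sup_ubound; exists ft => //; exists gt.
Qed.
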